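(* Consider an asynchronous shared-memory system of $n$ processes in which up to $t$ processes may crash, with $n > 2t$. For every integer $k > \frac{n-t}{n-2t}$, algorithm $\mathcal{A}_3$ (described in the context) solves $k$-set agreement.
   Context: $k$-set agreement (decisions allowed in $V\cup\{\bot\}$, $\bot$ counting as a decided value): each process proposes an initial value from a set $V$; (Validity) if all correct processes propose the same value $v$, no correct process decides a value different from $v$; (Agreement) at most $k$ distinct values are decided by correct processes; (Termination) every correct process eventually decides. A crashed process stops taking steps; a correct process never crashes. Model: processes communicate through an atomic snapshot object $S$ with one entry per process (initially all $\bot$), supporting $\mathrm{update}(m)$ (process $p_i$ writes $m$ into its own entry) and $\mathrm{snapshot}()$ (returns the vector of all entries), both atomic (linearizable) and wait-free. Asynchronous: no timing bounds. Algorithm $\mathcal{A}_3$, code of $p_i$ with initial value $m$: $p_i$ performs $S.\mathrm{update}(m)$, then repeatedly calls $L_i := S.\mathrm{snapshot}()$ until $L_i$ has at least $n-t$ non-$\bot$ entries; it sets $X_i := L_i$ and $x_i :=$ number of non-$\bot$ entries of $X_i$. If at least $x_i - t$ entries of $X_i$ equal $m$, it decides $m$; else, if some value $v$ has at least $x_i - t$ entries in $X_i$ equal to it, it decides such a $v$; else it decides $\bot$. *)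

(* Defs.v *)
(* Model of algorithm A_3 in an asynchronous shared-memory
   system with an atomic snapshot object, as an interleaving of atomic steps. *)
From mathcomp Require Import all_boot.
Set Implicit Arguments. Unset Strict Implicit. Unset Printing Implicit Defensive.

Section A3.
Variables (n t : nat) (V : eqType).

(* Local control state of a process; [Done d] records the decided value,
   with [None] standing for bottom. *)
Inductive phase := Init | Scan | Done of option V.

(* Global configuration: the snapshot object S (None = bottom) and the
   local phases of all processes. *)
Record config := Config { mem : 'I_n -> option V; loc : 'I_n -> phase }.

Definition init_config : config := Config (fun _ => None) (fun _ => Init).

Definition nonbot (L : 'I_n -> option V) : nat := #|[pred j | L j != None]|.
Definition cnt (L : 'I_n -> option V) (v : V) : nat := #|[pred j | L j == Some v]|.

Definition decision_ok (L : 'I_n -> option V) (m : V) (d : option V) : Prop :=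
  let x := nonbot L in
  if x - t <= cnt L m then d = Some m
  else (exists v, d = Some v /\ x - t <= cnt L v)
       \/ (d = None /\ forall v, cnt L v < x - t).

Definition step (prop : 'I_n -> V) (i : 'I_n) (c c' : config) : Prop :=
  (forall j, j != i -> loc c' j = loc c j) /\
  match loc c i with
  | Init => (forall j, mem c' j = if j == i then Some (prop i) else mem c j)
            /\ loc c' i = Scan
  | Scan => (forall j, mem c' j = mem c j) /\
            (if n - t <= nonbot (mem c)
             then exists d, decision_ok (mem c) (prop i) d /\ loc c' i = Done d
             else loc c' i = Scan)
  | Done _ => (forall j, mem c' j = mem c j) /\ loc c' i = loc c i
  end.

Definition execution (prop : 'I_n -> V) (sched : nat -> 'I_n) (conf : nat -> config) : Prop :=
  conf 0 = init_config /\ forall s, step prop (sched s) (conf s) (conf s.+1).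

Definition correct (sched : nat -> 'I_n) (i : 'I_n) : Prop :=
  forall N, exists s, N <= s /\ sched s = i.

Definition at_most_t_crashes (sched : nat -> 'I_n) : Prop :=
  exists F : {set 'I_n}, #|F| <= t /\ forall i, i \notin F -> correct sched i.

Definition decides (conf : nat -> config) (i : 'I_n) (d : option V) : Prop :=
  exists s, loc (conf s) i = Done d.

Definition validity (prop : 'I_n -> V) (sched : nat -> 'I_n) (conf : nat -> config) : Prop :=
  forall v, (forall i, correct sched i -> prop i = v) ->
  forall i d, correct sched i -> decides conf i d -> d = Some v.

Definition agreement (k : nat) (sched : nat -> 'I_n) (conf : nat -> config) : Prop :=
  exists D : seq (option V), size D <= k /\
    forall i d, correct sched i -> decides conf i d -> d \in D.

Definition termination (sched : nat -> 'I_n) (conf : nat -> config) : Prop :=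
  forall i, correct sched i -> exists d, decides conf i d.

Definition solves_set_agreement (k : nat) : Prop :=
  forall (prop : 'I_n -> V) sched conf,
    execution prop sched conf -> at_most_t_crashes sched ->
    [/\ validity prop sched conf, agreement k sched conf & termination sched conf].
End A3.

(* Main.v *)
Require Import Defs.
From mathcomp Require Import all_boot zify.
Set Implicit Arguments. Unset Strict Implicit. Unset Printing Implicit Defensive.

Notation memc := Defs.mem.

Lemma inv_ok n t (V : eqType) (prop : 'I_n -> V) sched conf :
  execution t prop sched conf -> forall s j,
  (loc (conf s) j = Init V /\ memc (conf s) j = None) \/
  (loc (conf s) j <> Init V /\ memc (conf s) j = Some (prop j)).
Proof.
move=> [H0 Hs] s j; elim: s => [|s IH].
  by left; rewrite H0.
have [Hl Hm] := Hs s.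
move: IH; case: (eqVneq j (sched s)) => [->|Hne] IH.
  move: IH Hm; set i := sched s.
  case: (loc (conf s) i) => [|| d].
  - move=> [[_ Hnone]|[//]] [Hm ->]; right; split => //.
    by rewrite Hm eqxx.
  - move=> IH [Hm Hc]; right; rewrite Hm.
    case: IH => [[//]|[_ ->]]; split => //.
    by case: ifP Hc => _; [move=> [d [_ ->]] | move=> ->].
  - move=> IH [Hm ->]; rewrite Hm; case: IH => [[//]|[_ ->]]; by right.
rewrite Hl //.
have Hmj : memc (conf s.+1) j = memc (conf s) j.
  case: (loc (conf s) (sched s)) Hm => [[Hm _]|[Hm _]|d [Hm _]]; rewrite Hm //.
  by rewrite (negbTE Hne).
by rewrite Hmj.
Qed.
Lemma mem_step n t (V : eqType) (prop : 'I_n -> V) sched conf :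
  execution t prop sched conf -> forall s j x,
  memc (conf s) j = Some x -> memc (conf s.+1) j = Some x.
Proof.
move=> Hex s j x Hj; have [H0 Hs] := Hex; have [Hl Hm] := Hs s.
move: Hm; case E: (loc (conf s) (sched s)) => [||d] [Hm _]; rewrite Hm //.
case: eqP => [Hji|] //; subst j.
by case: (inv_ok Hex s (sched s)) => [[_ H]|[H _]]; [rewrite H in Hj | rewrite E in H].
Qed.

Lemma mem_mono n t (V : eqType) (prop : 'I_n -> V) sched conf :
  execution t prop sched conf -> forall s s' j x, s <= s' ->
  memc (conf s) j = Some x -> memc (conf s') j = Some x.
Proof.
move=> Hex s s' j x /subnK <-; elim: (s' - s) => [//|m IH] Hj.
by rewrite addSn; apply: (mem_step Hex); apply: IH.
Qed.

Lemma decided_src n t (V : eqType) (prop : 'I_n -> V) sched conf :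
  execution t prop sched conf -> forall s i d,
  loc (conf s) i = Done d -> exists s0, s0 < s /\
    n - t <= nonbot (memc (conf s0)) /\ decision_ok t (memc (conf s0)) (prop i) d.
Proof.
move=> [H0 Hs]; elim=> [|s IH] i d; first by rewrite H0.
have [Hl Hm] := Hs s.
case: (eqVneq i (sched s)) => [Hi|Hne]; last first.
  by rewrite Hl // => /IH [s0 [Hs0 HH]]; exists s0; split => //; apply: ltnW.
subst i; move: Hm; case E: (loc (conf s) (sched s)) => [|| d'].
- by move=> [_ ->].
- move=> [_]; case: ifP => Hn; last by move=> ->.
  move=> [d0 [Hok ->]] [<-]; exists s; split => //.
- move=> [_ ->] Ed; have [s0 [Hs0 HH]] := IH _ _ E.
  by move: Ed HH => [<-] HH; exists s0; split => //; apply: ltnW.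
Qed.

Lemma correct_written n t (V : eqType) (prop : 'I_n -> V) sched conf :
  execution t prop sched conf -> forall j, correct sched j ->
  exists T, forall s, T <= s -> memc (conf s) j = Some (prop j).
Proof.
move=> Hex j Hc; have [H0 Hs] := Hex.
have [s1 [_ Hs1]] := Hc 0.
have Hnot : loc (conf s1.+1) j <> Init V.
  have [Hl Hm] := Hs s1; move: Hm; rewrite Hs1.
  case E: (loc (conf s1) j) => [|| d].
  - by move=> [_ ->].
  - by move=> [_]; case: ifP => _; [move=> [d [_ ->]] | move=> ->].
  - by move=> [_ ->].
exists s1.+1 => s Hle; apply: (mem_mono Hex Hle).
by case: (inv_ok Hex s1.+1 j) => [[]|[]].
Qed.

Lemma all_written n t (V : eqType) (prop : 'I_n -> V) sched conf :
  execution t prop sched conf -> forall l : seq 'I_n,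
  (forall j, j \in l -> correct sched j) ->
  exists T, forall s, T <= s -> forall j, j \in l -> memc (conf s) j = Some (prop j).
Proof.
move=> Hex; elim=> [|a l IH] Hc; first by exists 0.
have [T1 H1] := correct_written Hex (Hc a (mem_head _ _)).
have [T2 H2] : exists T, forall s, T <= s -> forall j, j \in l -> memc (conf s) j = Some (prop j).
  by apply: IH => j Hj; apply: Hc; rewrite inE Hj orbT.
exists (maxn T1 T2) => s; rewrite geq_max => /andP [Hs1 Hs2] j; rewrite inE => /orP [/eqP ->|Hj].
  exact: H1.
exact: H2.
Qed.

Lemma card_split n (A B C : pred 'I_n) :
  (forall j, A j -> ~~ C j -> B j) -> #|A| <= #|B| + #|C|.
Proof.
move=> H; rewrite -(cardID C A) addnC; apply: leq_add; apply: subset_leq_card;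
  apply/subsetP => j; rewrite !inE.
- by move=> /andP [Hc Ha]; apply: H.
- by case/andP.
Qed.

Lemma cnt_mono n (V : eqType) (L Ls : 'I_n -> option V) v :
  (forall j x, Ls j = Some x -> L j = Some x) ->
  cnt L v + nonbot Ls <= cnt Ls v + nonbot L.
Proof.
move=> Hm.
have C1 : #|[predI [pred j | L j == Some v] & [pred j | Ls j != None]]| +
          #|[predD [pred j | L j == Some v] & [pred j | Ls j != None]]| = cnt L v.
  exact: cardID.
have C2 : #|[predI [pred j | L j != None] & [pred j | Ls j != None]]| +
          #|[predD [pred j | L j != None] & [pred j | Ls j != None]]| = nonbot L.
  exact: cardID.
have E1 : #|[predI [pred j | L j != None] & [pred j | Ls j != None]]| = nonbot Ls.
  apply: eq_card => j; rewrite !inE; case E: (Ls j) => [x|]; last by rewrite andbF.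
  by rewrite (Hm _ _ E).
have H1 : #|[predI [pred j | L j == Some v] & [pred j | Ls j != None]]| <= cnt Ls v.
  apply: subset_leq_card; apply/subsetP => j; rewrite !inE.
  case E: (Ls j) => [x|]; last by rewrite andbF.
  by rewrite (Hm _ _ E) andbT.
have H2 : #|[predD [pred j | L j == Some v] & [pred j | Ls j != None]]| <=
          #|[predD [pred j | L j != None] & [pred j | Ls j != None]]|.
  apply: subset_leq_card; apply/subsetP => j; rewrite !inE.
  by case/andP => -> /eqP ->.
lia.
Qed.

Lemma sum_cnt n (V : eqType) (L : 'I_n -> option V) c (s : seq (option V)) :
  uniq s -> (forall o, o \in s -> c <= #|[pred j | L j == o]|) ->
  size s * c <= #|[pred j | L j \in s]|.
Proof.
elim: s => [|o s IH] //= /andP [Hos Hu] Hc.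
have C : #|[predI [pred j | L j \in o :: s] & [pred j | L j == o]]| +
         #|[predD [pred j | L j \in o :: s] & [pred j | L j == o]]| = #|[pred j | L j \in o :: s]|.
  exact: cardID.
have E1 : #|[predI [pred j | L j \in o :: s] & [pred j | L j == o]]| = #|[pred j | L j == o]|.
  apply: eq_card => j; rewrite !inE; case: eqP => [->|_]; by rewrite ?eqxx ?andbF ?andbT.
have E2 : #|[predD [pred j | L j \in o :: s] & [pred j | L j == o]]| = #|[pred j | L j \in s]|.
  apply: eq_card => j; rewrite !inE; case: eqP => [->|_] /=; by rewrite ?(negbTE Hos).
rewrite -C E1 E2 mulSn; apply: leq_add; first by apply: Hc; rewrite mem_head.
by apply: IH => // o' Ho'; apply: Hc; rewrite inE Ho' orbT.
Qed.

Theorem theorem6 (n t k : nat) (V : eqType) :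
  2 * t < n -> n - t < k * (n - 2 * t) ->
  solves_set_agreement n t V k.
Proof.
move=> Ht Hk prop sched conf Hex [F [HF Hc]].
have [T HT] : exists T, forall s, T <= s -> forall j, j \in enum (~: F) ->
    memc (conf s) j = Some (prop j).
  apply: all_written Hex _ _ => j; rewrite mem_enum inE; exact: Hc.
have Hfull : forall s, T <= s -> n - t <= nonbot (memc (conf s)).
  move=> s Hs; apply: (@leq_trans #|~: F|).
    by have := cardsC F; rewrite card_ord; lia.
  apply: subset_leq_card; apply/subsetP => j; rewrite !inE => Hj.
  by rewrite HT // mem_enum inE.
split.
- move=> v Hv i d Hci [s Hs]; have [s0 [_ [Hn Hok]]] := decided_src Hex Hs.
  move: Hn Hok; set L := memc (conf s0) => Hn Hok.
  have Hcnt : nonbot L <= cnt L v + #|[pred j | j \in F]|.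
    apply: card_split => j /= HL HF'.
    case: (inv_ok Hex s0 j) => [[_ H]|[_ H]]; first by rewrite /L H in HL.
    by rewrite /L H (Hv j (Hc j HF')).
  have HFc : #|[pred j | j \in F]| = #|F| by apply: eq_card.
  move: Hok; rewrite /decision_ok (Hv i Hci) ifT //; lia.
- have Hex2 : exists s, n - t <= nonbot (memc (conf s)) by exists T; apply: Hfull.
  case: (ex_minnP Hex2) => s0 Hs0 Hmin.
  move: Hs0 Hmin; set Ls := memc (conf s0); set xs := nonbot Ls => Hs0 Hmin.
  pose good (o : option V) := if o is Some v then xs - t <= cnt Ls v else false.
  pose D' := undup (filter good (map Ls (enum 'I_n))).
  exists (None :: D'); split.
  + have Hsz : size D' * (xs - t) <= xs.
      apply: leq_trans (sum_cnt (L:=Ls) (c := xs - t) (undup_uniq _) _) _.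
        move=> o; rewrite mem_undup mem_filter => /andP [Hg _].
        by case: o Hg => [v|] //=.
      rewrite /xs /nonbot; apply: subset_leq_card; apply/subsetP => j; rewrite !inE => Hj.
      apply/negP => /eqP E; rewrite E mem_undup mem_filter in Hj.
      by move: Hj => /andP [].
    rewrite /=; apply/negPn/negP; rewrite -leqNgt => Hkm.
    have Hk0 : 0 < k by case: k Hk Hkm; rewrite ?mul0n.
    have H1 : k * (xs - t) <= size D' * (xs - t) by apply: leq_mul.
    have H2 : k * (xs - t) = k * (n - 2 * t) + k * (xs - (n - t)).
      rewrite -mulnDr; congr (_ * _); lia.
    have H3 : xs - (n - t) <= k * (xs - (n - t)) by apply: leq_pmull.
    lia.
  + move=> i d Hci [s Hs]; have [s1 [_ [Hn1 Hok]]] := decided_src Hex Hs.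
    have Hle : s0 <= s1 := Hmin _ Hn1.
    move: Hn1 Hok; set L := memc (conf s1) => Hn1 Hok.
    have Hkey : forall v, nonbot L - t <= cnt L v -> Some v \in None :: D'.
      move=> v Hv.
      have Hc' := @cnt_mono n V L Ls v (fun j x => @mem_mono _ _ _ _ _ _ Hex _ _ j x Hle).
      have Hnm : xs <= nonbot L.
        rewrite /xs /nonbot; apply: subset_leq_card; apply/subsetP => j; rewrite !inE.
        case E: (Ls j) => [x|] //; by rewrite /L (mem_mono Hex Hle E).
      have Hg : xs - t <= cnt Ls v by lia.
      rewrite in_cons /= mem_undup mem_filter /= Hg /=.
      have /card_gt0P [j Hj] : 0 < cnt Ls v by lia.
      apply/mapP; exists j; first by rewrite mem_enum.
      by move: Hj; rewrite inE => /eqP.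
    move: Hok; rewrite /decision_ok; case: ifP => Hif.
    * by move=> ->; apply: Hkey.
    * move=> [[v [-> Hv]] | [-> _]]; [exact: Hkey | by rewrite mem_head].
- move=> i Hci; have [Ti HTi] := correct_written Hex Hci.
  have [s [Hs Hsi]] := Hci (maxn T Ti).
  move: Hs; rewrite geq_max => /andP [HsT HsTi].
  have [Hl Hm] := Hex.2 s; rewrite Hsi in Hm.
  move: Hm; case E: (loc (conf s) i) => [||d].
  + case: (inv_ok Hex s i) => [[_ H]|[H _]]; first by rewrite HTi in H.
    by rewrite E in H.
  + move=> [_]; rewrite (Hfull s HsT) => [[d [_ Hd]]]; exists d, s.+1; exact: Hd.
  + by move=> _; exists d, s.
Qed.
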